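(* Let $\sigma:[0,\infty)\to[0,\infty)$ be nondecreasing with $\lim_{t\to\infty}\sigma(t)=\infty$. If $\gamma(\sigma)>1$, then $\gamma(\sigma)=\gamma((\sigma^{\star})^{\iota})+1$.
   Context: Upper Legendre conjugate: $\sigma^{\star}(s):=\sup_{t\ge0}\{\sigma(t)-st\}$ for $s>0$; $(\sigma^{\star})^{\iota}(t):=\sigma^{\star}(1/t)$ for $t>0$. For a nondecreasing function $\sigma$ tending to $\infty$ and $\gamma>0$, $(P_{\sigma,\gamma})$ holds if there is $K>1$ with $\limsup_{t\to\infty}\sigma(K^{\gamma}t)/\sigma(t)<K$; $\gamma(\sigma):=\sup\{\gamma>0:(P_{\sigma,\gamma})\text{ holds}\}$, and $:=0$ if none holds. *)

(* Defs.v *)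
From HB Require Import structures.
From mathcomp Require Import all_boot all_order all_algebra.
From mathcomp Require Import all_classical all_reals all_analysis.
Set Implicit Arguments. Unset Strict Implicit. Unset Printing Implicit Defensive.
Import Order.TTheory GRing.Theory Num.Theory.
Import numFieldNormedType.Exports.
Local Open Scope classical_set_scope.
Local Open Scope ring_scope.

Definition legendre_conj {R : realType} (sigma : R -> R) (s : R) : \bar R :=
  ereal_sup [set (sigma t - s * t)%:E | t in [set t : R | 0 <= t]].

(* iota-transform of the conjugate: t |-> sigma-star(1/t), for t > 0; real-valued via [fine]
   (it is finite under the hypotheses of the statement). *)
Definition legendre_conj_iota {R : realType} (sigma : R -> R) (t : R) : R :=
  fine (legendre_conj sigma t^-1).

Definition propP {R : realType} (sigma : R -> R) (g : R) : Prop :=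
  exists K : R, 1 < K /\
    (limf_esup (fun t : R => (sigma (K `^ g * t) / sigma t)%:E) +oo%R
      < K%:E)%E.

Definition gammaI {R : realType} (sigma : R -> R) : \bar R :=
  if `[< exists g : R, 0 < g /\ propP sigma g >] then
    ereal_sup [set g%:E | g in [set g : R | 0 < g /\ propP sigma g]]
  else 0%E.

(* Main.v *)
Set Warnings "-all".

Require Import Defs.
From mathcomp Require Import ring lra.
From mathcomp Require Import all_boot all_order all_algebra.
From mathcomp Require Import all_classical all_reals all_analysis.
Import Order.TTheory GRing.Theory Num.Theory.
Import numFieldNormedType.Exports.
Local Open Scope classical_set_scope.
Local Open Scope ring_scope.
Set Implicit Arguments. Unset Strict Implicit. Unset Printing Implicit Defensive.
Definition Ev (R : realType) (f : R -> R) (H L : R) :=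
  exists t0, 0 <= t0 /\ forall t, t0 <= t -> f (H * t) <= L * f t.

Lemma propP_Ev (R : realType) (f : R -> R) (g : R)
  (fpos : exists T, forall t, T <= t -> 0 < f t) :
  propP f g -> exists a l, [/\ 0 < a, 0 <= l, l < a & Ev f (expR (g * a)) (expR l)].
Proof.
case=> K [K1 hK].
move/ereal_inf_lt: hK => [y [V hV <-] hy].
have [L [L1 LK hL]] : exists L, [/\ 1 <= L, L < K &
    (ereal_sup [set (f (K `^ g * t) / f t)%:E | t in V] <= L%:E)%E].
  move: hy; case: (ereal_sup _) => [r| |] hy.
  - exists (Num.max r 1); split; first by rewrite le_max lexx orbT.
      by rewrite gt_max K1 andbT -lte_fin.
    by rewrite lee_fin le_max lexx.
  - by [].
  - by exists 1; split => //; rewrite leNye.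
have K0 : 0 < K by apply: lt_trans K1.
have L0 : 0 < L by apply: lt_le_trans L1.
exists (ln K), (ln L); split.
- by rewrite ln_gt0.
- by rewrite ln_ge0.
- by rewrite ltr_ln // posrE.
have -> : expR (g * ln K) = K `^ g by rewrite /powR gt_eqF.
rewrite lnK ?posrE //.
case: hV => M [Mr hM]; case: fpos => T hT.
exists (Num.max (M + 1) (Num.max T 0)); split; first by rewrite !le_max lexx !orbT.
move=> t; rewrite !ge_max => /and3P[Mt Tt t0].
have ft : 0 < f t by apply: hT.
have Vt : V t by apply: hM; apply: lt_le_trans Mt; rewrite ltrDl.
have : ((f (K `^ g * t) / f t)%:E <= L%:E)%E.
  by apply: le_trans hL; apply: ereal_sup_ubound; exists t.
by rewrite lee_fin ler_pdivrMr.
Qed.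

Lemma Ev_propP (R : realType) (f : R -> R) (g a l : R)
  (fpos : exists T, forall t, T <= t -> 0 < f t) :
  0 < a -> l < a -> Ev f (expR (g * a)) (expR l) -> propP f g.
Proof.
move=> a0 la [t0 [t00 ht0]]; case: fpos => T hT.
exists (expR a); split; first by rewrite expR_gt1.
have -> : expR a `^ g = expR (g * a) by rewrite /powR gt_eqF ?expR_gt0 // expRK.
apply: (@le_lt_trans _ _ (expR l)%:E); last by rewrite lte_fin ltr_expR.
apply: (@le_trans _ _ (ereal_sup [set (f (expR (g * a) * t) / f t)%:E | t in
   [set t | Num.max t0 T < t]])).
  apply: ereal_inf_lbound; exists [set t | Num.max t0 T < t] => //.
  by exists (Num.max t0 T); split; [exact: num_real | move=> x].
apply: ge_ereal_sup => _ [t /= + <-]; rewrite gt_max => /andP[t0t Tt].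
have ft : 0 < f t by apply: hT; apply: ltW.
by rewrite lee_fin ler_pdivrMr //; apply: ht0; apply: ltW.
Qed.

Lemma Ev_iter (R : realType) (f : R -> R) (H L : R) : 1 <= H -> 0 <= L -> Ev f H L ->
  exists t0, 0 <= t0 /\ forall n t, t0 <= t -> f (H ^+ n * t) <= L ^+ n * f t.
Proof.
move=> H1 L0 [t0 [t00 ht0]]; exists t0; split => // n t tt0.
elim: n => [|n IH]; first by rewrite !expr0 !mul1r.
rewrite !exprS -mulrA; apply: le_trans (ht0 _ _) _.
  apply: (le_trans tt0); rewrite ler_peMl //; first exact: (le_trans t00 tt0).
  exact: exprn_ege1.
by rewrite -mulrA ler_wpM2l.
Qed.

Lemma conj_E (R : realType) (sigma : R -> R) (t c : R) : 0 < t ->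
  (forall u, 0 <= u -> sigma u - t^-1 * u <= c) ->
  legendre_conj sigma t^-1 = (legendre_conj_iota sigma t)%:E.
Proof.
move=> t0 hc; rewrite /legendre_conj_iota.
set S := legendre_conj sigma t^-1.
have Sle : (S <= c%:E)%E.
  by apply: ge_ereal_sup => _ [u /= u0 <-]; rewrite lee_fin hc.
have Sge : ((sigma 0 - t^-1 * 0)%:E <= S)%E.
  rewrite /S /legendre_conj; by apply: ereal_sup_ubound => /=; exists 0.
by move: Sle Sge; clearbody S; case: S.
Qed.

Lemma conj_ge (R : realType) (sigma : R -> R) (t c : R) : 0 < t ->
  (forall u, 0 <= u -> sigma u - t^-1 * u <= c) ->
  forall u, 0 <= u -> sigma u - t^-1 * u <= legendre_conj_iota sigma t.
Proof.
move=> t0 hc u u0; rewrite -lee_fin -(conj_E t0 hc).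
by apply: ereal_sup_ubound; exists u.
Qed.

Lemma conj_le (R : realType) (sigma : R -> R) (t c : R) : 0 < t ->
  (forall u, 0 <= u -> sigma u - t^-1 * u <= c) ->
  legendre_conj_iota sigma t <= c.
Proof.
move=> t0 hc; rewrite -lee_fin -(conj_E t0 hc).
by apply: ge_ereal_sup => _ [u /= u0 <-]; rewrite lee_fin hc.
Qed.

Lemma big_ev (R : realType) (sigma : R -> R)
  (hlim : sigma t @[t --> +oo] --> +oo) (c : R) :
  exists T, forall t, T <= t -> c < sigma t.
Proof.
have [M [Mr hM]] := cvgry_gt hlim c.
exists (M + 1) => t Mt; apply: hM; lra.
Qed.

Lemma pow_ineq (R : realType) (h0 l0 : R) : 0 <= l0 -> l0 < h0 ->
  forall n, (Num.Def.archi_bound (l0 / (h0 - l0)) <= n)%N ->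
  expR l0 ^+ n.+1 <= expR h0 ^+ n.
Proof.
move=> l00 lh n hn; rewrite -!expRM_natl ler_expR.
have hd : 0 < h0 - l0 by lra.
have := archi_boundP (divr_ge0 l00 (ltW hd)).
rewrite ltr_pdivrMr // => h1.
have h2 : (Num.Def.archi_bound (l0 / (h0 - l0)))%:R <= n%:R :> R by rewrite ler_nat.
have h3 : (Num.Def.archi_bound (l0 / (h0 - l0)))%:R * (h0 - l0) <= n%:R * (h0 - l0).
  by apply: ler_wpM2r => //; apply: ltW.
rewrite -natr1; nra.
Qed.

Lemma CB (R : realType) (sigma : R -> R)
  (hpos : forall t : R, 0 <= t -> 0 <= sigma t)
  (hmono : forall s t : R, 0 <= s -> s <= t -> sigma s <= sigma t)
  (hlim : sigma t @[t --> +oo] --> +oo) (h0 l0 : R) :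
  0 <= l0 -> l0 < h0 -> Ev sigma (expR h0) (expR l0) ->
  exists M t0, [/\ 1 <= M, 0 < t0 & forall u, t0 <= u -> 0 < sigma u /\
     forall v, 0 <= v -> sigma v <= M * sigma u + v / u * sigma u].
Proof.
move=> l00 lh hEv.
have h00 : 0 < h0 by apply: le_lt_trans lh.
have H1 : 1 <= expR h0 by apply: ltW; rewrite expR_gt1.
have L1 : 1 <= expR l0 by rewrite -expR0 ler_expR.
have [t1 [t10 hit]] := Ev_iter H1 (ltW (expR_gt0 _)) hEv.
have [T hT] := big_ev hlim 0.
set k0 := Num.Def.archi_bound (l0 / (h0 - l0)).
set M := expR l0 ^+ k0.
have M1 : 1 <= M by apply: exprn_ege1.
exists M, (Num.max 1 (Num.max t1 T)); split => //.
  by apply: (lt_le_trans ltr01); rewrite le_max lexx.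
move=> u; rewrite !ge_max => /and3P[u1 t1u Tu].
have su : 0 < sigma u by apply: hT.
split => //.
have u0 : 0 < u by apply: lt_le_trans u1.
have key : forall n v, 0 <= v -> v <= expR h0 ^+ n * u ->
    sigma v <= M * sigma u + v / u * sigma u.
  elim => [|n IH] v v0 hv.
    rewrite expr0 mul1r in hv.
    have h1 := hmono _ _ v0 hv.
    have h2 : sigma u <= M * sigma u by rewrite ler_peMl // ltW.
    have h3 : 0 <= v / u * sigma u by apply: mulr_ge0; [apply: divr_ge0 => //; apply: ltW|apply: ltW].
    lra.
  case: (leP v (expR h0 ^+ n * u)) => hvn; first exact: IH.
  have s1 : sigma v <= expR l0 ^+ n.+1 * sigma u.
    by apply: le_trans (hmono _ _ v0 hv) (hit _ _ t1u).
  have vu : expR h0 ^+ n < v / u by rewrite ltr_pdivlMr.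
  have h3 : 0 <= v / u * sigma u by apply: mulr_ge0; [apply: divr_ge0 => //; apply: ltW|apply: ltW].
  case: (leqP n.+1 k0) => hk.
    have h4 : expR l0 ^+ n.+1 <= M by apply: ler_weXn2l.
    have := ler_wpM2r (ltW su) h4; lra.
  have h4 : expR l0 ^+ n.+1 <= v / u.
    by apply: le_trans (ltW vu); apply: pow_ineq.
  have := ler_wpM2r (ltW su) h4.
  have : 0 <= M * sigma u by apply: mulr_ge0; [exact: (le_trans ler01 M1)|exact: ltW].
  lra.
move=> v v0.
have hvu : 0 <= v / (u * h0) by apply: divr_ge0 => //; apply: ltW; apply: mulr_gt0.
apply: (key (Num.Def.archi_bound (v / (u * h0)))) => //.
have := archi_boundP hvu; rewrite ltr_pdivrMr ?mulr_gt0 // => hn.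
rewrite -expRM_natl.
have := expR_ge1Dx ((Num.Def.archi_bound (v / (u * h0)))%:R * h0).
nra.
Qed.

Lemma SMALL (R : realType) (sigma : R -> R)
  (hmono : forall s t : R, 0 <= s -> s <= t -> sigma s <= sigma t)
  (hlim : sigma t @[t --> +oo] --> +oo) (h0 l0 : R) :
  0 <= l0 -> l0 < h0 -> Ev sigma (expR h0) (expR l0) ->
  forall eps T, 0 < eps -> exists u, [/\ T <= u, 0 < u & sigma u <= eps * u].
Proof.
move=> l00 lh hEv eps T e0.
have h00 : 0 < h0 by apply: le_lt_trans lh.
have H1 : 1 <= expR h0 by apply: ltW; rewrite expR_gt1.
have [t1 [t10 hit]] := Ev_iter H1 (ltW (expR_gt0 _)) hEv.
have [T1 hT1] := big_ev hlim 0.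
set T' := Num.max 1 (Num.max t1 (Num.max T T1)).
have T'1 : 1 <= T' by rewrite le_max lexx.
have T'0 : 0 < T' by apply: lt_le_trans T'1.
have t1T : t1 <= T' by rewrite !le_max lexx !orbT.
have TT : T <= T' by rewrite !le_max lexx !orbT.
have sT : 0 < sigma T' by apply: hT1; rewrite !le_max lexx !orbT.
have hd : 0 < h0 - l0 by lra.
have eT : 0 < eps * T' by apply: mulr_gt0.
have hq : 0 <= sigma T' / (eps * T') / (h0 - l0).
  by apply: divr_ge0; [apply: divr_ge0; apply: ltW|apply: ltW].
set n := Num.Def.archi_bound (sigma T' / (eps * T') / (h0 - l0)).
have := archi_boundP hq; rewrite -/n ltr_pdivrMr // ltr_pdivrMr // => hn.
have e1 := expR_ge1Dx (n%:R * (h0 - l0)).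
have e2 : sigma T' < eps * T' * expR (n%:R * (h0 - l0)) by nra.
exists (expR h0 ^+ n * T'); split.
- apply: (le_trans TT); rewrite ler_peMl //; first exact: ltW.
  exact: exprn_ege1.
- by apply: mulr_gt0 => //; apply: exprn_gt0; apply: expR_gt0.
apply: (le_trans (hit n T' t1T)).
have -> : expR h0 ^+ n = expR l0 ^+ n * expR (n%:R * (h0 - l0)).
  by rewrite -!expRM_natl -expRD; congr expR; ring.
have p0 : 0 < expR l0 ^+ n by apply: exprn_gt0; apply: expR_gt0.
have h : expR l0 ^+ n * sigma T' <= expR l0 ^+ n * (eps * T' * expR (n%:R * (h0 - l0))).
  by rewrite ler_pM2l // ltW.
apply: (le_trans h); rewrite le_eqVlt; apply/orP; left; apply/eqP; ring.
Qed.

Lemma conj_bound (R : realType) (sigma : R -> R)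
  (hpos : forall t : R, 0 <= t -> 0 <= sigma t)
  (hmono : forall s t : R, 0 <= s -> s <= t -> sigma s <= sigma t)
  (hlim : sigma t @[t --> +oo] --> +oo) (h0 l0 : R) :
  0 <= l0 -> l0 < h0 -> Ev sigma (expR h0) (expR l0) ->
  forall t, 0 < t -> exists c, forall u, 0 <= u -> sigma u - t^-1 * u <= c.
Proof.
move=> l00 lh hEv t t0.
have [M [t1 [M1 t10 hCB]]] := CB hpos hmono hlim l00 lh hEv.
have ti : 0 < t^-1 by rewrite invr_gt0.
have [u1 [t1u1 u10 su1]] := SMALL hmono hlim l00 lh hEv t1 ti.
have [s1 hv] := hCB u1 t1u1.
exists (M * sigma u1) => v v0.
have := hv v v0.
have : v / u1 * sigma u1 <= t^-1 * v.
  rewrite [t^-1 * v]mulrC -mulrA [u1^-1 * _]mulrC; apply: ler_wpM2l => //.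
  by rewrite ler_pdivrMr.
lra.
Qed.

Lemma g_ge (R : realType) (sigma : R -> R)
  (hpos : forall t : R, 0 <= t -> 0 <= sigma t)
  (hmono : forall s t : R, 0 <= s -> s <= t -> sigma s <= sigma t)
  (hlim : sigma t @[t --> +oo] --> +oo) (h0 l0 : R) :
  0 <= l0 -> l0 < h0 -> Ev sigma (expR h0) (expR l0) ->
  forall t, 0 < t -> forall u, 0 <= u ->
  sigma u - t^-1 * u <= legendre_conj_iota sigma t.
Proof.
move=> l00 lh hEv t t0.
have [c hc] := conj_bound hpos hmono hlim l00 lh hEv t0.
exact: conj_ge t0 hc.
Qed.

Lemma g_large (R : realType) (sigma : R -> R)
  (hpos : forall t : R, 0 <= t -> 0 <= sigma t)
  (hmono : forall s t : R, 0 <= s -> s <= t -> sigma s <= sigma t)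
  (hlim : sigma t @[t --> +oo] --> +oo) (h0 l0 : R) :
  0 <= l0 -> l0 < h0 -> Ev sigma (expR h0) (expR l0) ->
  forall c, exists T, 1 <= T /\ forall t, T <= t -> c <= legendre_conj_iota sigma t.
Proof.
move=> l00 lh hEv c.
have [T1 hT1] := big_ev hlim (c + 1).
set u := Num.max T1 0.
have u0 : 0 <= u by rewrite le_max lexx orbT.
have su : c + 1 < sigma u by apply: hT1; rewrite le_max lexx.
exists (Num.max 1 u); split; first by rewrite le_max lexx.
move=> t; rewrite ge_max => /andP[t1 ut].
have t0 : 0 < t by apply: lt_le_trans t1.
have := g_ge hpos hmono hlim l00 lh hEv t0 u0.
have : t^-1 * u <= 1.
  by rewrite mulrC ler_pdivrMr // mul1r.
lra.
Qed.

Lemma stepA (R : realType) (sigma : R -> R)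
  (hpos : forall t : R, 0 <= t -> 0 <= sigma t)
  (hmono : forall s t : R, 0 <= s -> s <= t -> sigma s <= sigma t)
  (hlim : sigma t @[t --> +oo] --> +oo) (h0 l0 : R) :
  0 <= l0 -> l0 < h0 -> Ev sigma (expR h0) (expR l0) ->
  forall H L, 0 < H -> 1 <= L -> Ev sigma H L ->
  Ev (legendre_conj_iota sigma) (H / L) L.
Proof.
move=> l00 lh hEv H L H0 L1 [t0 [t00 ht0]].
have L0 : 0 < L by apply: lt_le_trans L1.
have [T [T1 hT]] := g_large hpos hmono hlim l00 lh hEv (sigma (H * t0) / L).
exists T; split; first by apply: le_trans T1.
move=> t Tt.
have t0' : 0 < t by apply: lt_le_trans Tt; apply: lt_le_trans T1.
have tp : 0 < H / L * t by apply: mulr_gt0 => //; apply: divr_gt0.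
apply: (conj_le tp) => u u0.
have hgt := hT t Tt.
have gtL : sigma (H * t0) <= L * legendre_conj_iota sigma t.
  by move: hgt; rewrite ler_pdivrMr // [_ * L]mulrC.
have e : (H / L * t)^-1 * u = L * (t^-1 * (u / H)).
  by field; rewrite (gt_eqF H0) (gt_eqF t0') (gt_eqF L0).
rewrite e.
set v := u / H.
have uv : u = H * v by rewrite /v mulrC divfK // gt_eqF.
have v0 : 0 <= v by apply: divr_ge0 => //; apply: ltW.
case: (leP t0 v) => hv.
  have h1 := ht0 v hv.
  have h2 := g_ge hpos hmono hlim l00 lh hEv t0' v0.
  have h3 : L * (sigma v - t^-1 * v) <= L * legendre_conj_iota sigma t.
    by rewrite ler_pM2l.
  rewrite uv; lra.
have h1 : sigma u <= sigma (H * t0).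
  by apply: hmono => //; rewrite uv ler_pM2l //; apply: ltW.
have : 0 <= L * (t^-1 * v).
  by apply: mulr_ge0; [apply: ltW | apply: mulr_ge0 => //; rewrite invr_ge0 ltW].
lra.
Qed.

Lemma stepB (R : realType) (sigma : R -> R)
  (hpos : forall t : R, 0 <= t -> 0 <= sigma t)
  (hmono : forall s t : R, 0 <= s -> s <= t -> sigma s <= sigma t)
  (hlim : sigma t @[t --> +oo] --> +oo) (h0 l0 : R) :
  0 <= l0 -> l0 < h0 -> Ev sigma (expR h0) (expR l0) ->
  forall H L, 1 <= H -> 1 <= L -> Ev (legendre_conj_iota sigma) H L ->
  exists M, 1 <= M /\ forall n, Ev sigma ((H * L) ^+ n) ((M + 1) * L ^+ n).
Proof.
move=> l00 lh hEv H L H1 L1 hEvg.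
have [M [t0 [M1 t00 hCB]]] := CB hpos hmono hlim l00 lh hEv.
exists M; split => // n.
have [tg [tg0 hgit]] := Ev_iter H1 (le_trans ler01 L1) hEvg.
set tg' := Num.max tg 1.
have tg'1 : 1 <= tg' by rewrite le_max lexx orbT.
have tg'0 : 0 < tg' by apply: lt_le_trans tg'1.
have tgtg : tg <= tg' by rewrite le_max lexx.
have e : 0 < (2 * tg')^-1 by rewrite invr_gt0 mulr_gt0.
have [u1 [t0u1 u10 su1]] := SMALL hmono hlim l00 lh hEv t0 e.
have [s1pos hv1] := hCB u1 t0u1.
exists (Num.max t0 (M * u1)); split.
  by rewrite le_max (ltW t00).
move=> u; rewrite ge_max => /andP[t0u Mu1u].
have [su hvu] := hCB u t0u.
have u0 : 0 < u by apply: lt_le_trans t0u.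
set tau := u / sigma u.
have tau0 : 0 < tau by apply: divr_gt0.
have tauge : tg <= tau.
  apply: (le_trans tgtg); rewrite /tau ler_pdivlMr //.
  have a0 := hv1 u (ltW u0).
  have a1 : M * sigma u1 <= u / u1 * sigma u1.
    by apply: ler_wpM2r; [apply: ltW | rewrite ler_pdivlMr].
  have a2 : u / u1 * sigma u1 <= u * (2 * tg')^-1.
    rewrite -mulrA [u1^-1 * _]mulrC; apply: ler_wpM2l; first exact: ltW.
    by rewrite ler_pdivrMr.
  have a3 : sigma u <= u * (2 * tg')^-1 * 2 by lra.
  have a4 : u * (2 * tg')^-1 * 2 = u / tg' by field; rewrite gt_eqF.
  rewrite a4 in a3.
  by rewrite mulrC -ler_pdivlMr.
have gtau : legendre_conj_iota sigma tau <= M * sigma u.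
  apply: (conj_le tau0) => v v0.
  have -> : tau^-1 * v = v / u * sigma u.
    by rewrite /tau invf_div; field; rewrite (gt_eqF u0).
  have := hvu v v0; lra.
have gH := hgit n tau tauge.
have Hn0 : 0 < H ^+ n by apply: exprn_gt0; apply: lt_le_trans H1.
have Ln0 : 0 < L ^+ n by apply: exprn_gt0; apply: lt_le_trans L1.
have Hnt0 : 0 < H ^+ n * tau by apply: mulr_gt0.
have w0 : 0 <= (H * L) ^+ n * u.
  by apply: mulr_ge0; [apply: exprn_ge0; apply: mulr_ge0; [exact: (le_trans ler01 H1)|exact: (le_trans ler01 L1)] | apply: ltW].
have gg := g_ge hpos hmono hlim l00 lh hEv Hnt0 w0.
have e2 : (H ^+ n * tau)^-1 * ((H * L) ^+ n * u) = L ^+ n * sigma u.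
  by rewrite exprMn /tau; field; rewrite (gt_eqF Hn0) (gt_eqF u0) (gt_eqF su).
rewrite e2 in gg.
have h3 : L ^+ n * legendre_conj_iota sigma tau <= L ^+ n * (M * sigma u).
  by rewrite ler_pM2l.
nra.
Qed.

Lemma stepL1 (R : realType) (sigma : R -> R)
  (hpos : forall t : R, 0 <= t -> 0 <= sigma t)
  (hmono : forall s t : R, 0 <= s -> s <= t -> sigma s <= sigma t)
  (hlim : sigma t @[t --> +oo] --> +oo) (h0 l0 : R) :
  0 <= l0 -> l0 < h0 -> Ev sigma (expR h0) (expR l0) ->
  forall g, 1 < g -> propP sigma g -> propP (legendre_conj_iota sigma) (g - 1).
Proof.
move=> l00 lh hEv g g1 hP.
have [T hT] := big_ev hlim 0.
have [a [l [a0 lp la hE]]] := propP_Ev (ex_intro _ T hT) hP.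
have [T' [T'1 hT']] := g_large hpos hmono hlim l00 lh hEv 1.
have gpos : exists T, forall t, T <= t -> 0 < legendre_conj_iota sigma t.
  by exists T' => t /hT'; apply: lt_le_trans.
have L1 : 1 <= expR l by rewrite -expR0 ler_expR.
have hA := stepA hpos hmono hlim l00 lh hEv (expR_gt0 (g * a)) L1 hE.
rewrite -expRB in hA.
have g10 : 0 < g - 1 by lra.
apply: (@Ev_propP _ _ _ ((g * a - l) / (g - 1)) l gpos).
- by apply: divr_gt0 => //; nra.
- by rewrite ltr_pdivlMr //; nra.
have -> : (g - 1) * ((g * a - l) / (g - 1)) = g * a - l.
  by field; rewrite gt_eqF.
exact: hA.
Qed.

Lemma stepL2 (R : realType) (sigma : R -> R)
  (hpos : forall t : R, 0 <= t -> 0 <= sigma t)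
  (hmono : forall s t : R, 0 <= s -> s <= t -> sigma s <= sigma t)
  (hlim : sigma t @[t --> +oo] --> +oo) (h0 l0 : R) :
  0 <= l0 -> l0 < h0 -> Ev sigma (expR h0) (expR l0) ->
  forall g, 0 < g -> propP (legendre_conj_iota sigma) g -> propP sigma (g + 1).
Proof.
move=> l00 lh hEv g g0 hP.
have [T hT] := big_ev hlim 0.
have [T' [T'1 hT']] := g_large hpos hmono hlim l00 lh hEv 1.
have gpos : exists T, forall t, T <= t -> 0 < legendre_conj_iota sigma t.
  by exists T' => t /hT'; apply: lt_le_trans.
have [a [l [a0 lp la hE]]] := propP_Ev gpos hP.
have L1 : 1 <= expR l by rewrite -expR0 ler_expR.
have H1 : 1 <= expR (g * a) by rewrite -expR0 ler_expR; apply: ltW; apply: mulr_gt0.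
have [M [M1 hB]] := stepB hpos hmono hlim l00 lh hEv H1 L1 hE.
set c := ln (M + 1).
have c0 : 0 <= c by rewrite /c ln_ge0 //; lra.
have Mc : expR c = M + 1 by rewrite /c lnK // posrE; lra.
have gal : 0 < g * (a - l) by apply: mulr_gt0 => //; lra.
have hq : 0 <= (g + 1) * c / (g * (a - l)).
  by apply: divr_ge0; [apply: mulr_ge0 => //; lra | apply: ltW].
set n := (Num.Def.archi_bound ((g + 1) * c / (g * (a - l)))).+1.
have hn : (g + 1) * c < n%:R * (g * (a - l)).
  rewrite -ltr_pdivrMr //; apply: (lt_le_trans (archi_boundP hq)).
  by rewrite ler_nat /n leqnSn.
have n1 : 1 <= n%:R :> R by rewrite ler1n /n.
have := hB n.
have -> : (expR (g * a) * expR l) ^+ n = expR ((g + 1) * (n%:R * (g * a + l) / (g + 1))).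
  rewrite -expRD -expRM_natl; congr expR; field; rewrite gt_eqF //; lra.
have -> : (M + 1) * expR l ^+ n = expR (c + n%:R * l).
  by rewrite expRD Mc expRM_natl.
apply: Ev_propP (ex_intro _ T hT) _ _.
- apply: divr_gt0; last lra.
  by apply: mulr_gt0; nra.
rewrite ltr_pdivlMr; last lra.
nra.
Qed.

Theorem corollary2p25 (R : realType) (sigma : R -> R)
  (hpos : forall t : R, 0 <= t -> 0 <= sigma t)
  (hmono : forall s t : R, 0 <= s -> s <= t -> sigma s <= sigma t)
  (hlim : sigma t @[t --> +oo] --> +oo)
  (hgt1 : (1 < gammaI sigma)%E) :
  gammaI sigma = (gammaI (legendre_conj_iota sigma) + 1)%E.
Proof.
move: hgt1; rewrite /gammaI.
case: asboolP => [hex1|_]; last by rewrite lte_fin ltr10.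
move=> /ereal_sup_gt [_ [g0 [g00 hg0] <-]]; rewrite lte_fin => g01.
have [T hT] := big_ev hlim 0.
have [a0 [l0 [a00 l00 la0 hE0]]] := propP_Ev (ex_intro _ T hT) hg0.
have lh : l0 < g0 * a0 by nra.
have hL1 := stepL1 hpos hmono hlim l00 lh hE0.
have hL2 := stepL2 hpos hmono hlim l00 lh hE0.
have g10 : 0 < g0 - 1 by lra.
have hg1 := hL1 _ g01 hg0.
case: asboolP => [hex2|hnex]; last by exfalso; apply: hnex; exists (g0 - 1).
set S1 := ereal_sup _.
set S2 := ereal_sup _.
have S2ge : ((g0 - 1)%:E <= S2)%E by apply: ereal_sup_ubound; exists (g0 - 1).
apply/eqP; rewrite eq_le; apply/andP; split.
  apply: ge_ereal_sup => _ [x [x0 hx] <-].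
  case: (leP x 1) => hx1.
    apply: (@le_trans _ _ ((g0 - 1)%:E + 1%:E)%E); last exact: leeD2r.
    by rewrite -EFinD lee_fin; lra.
  have hx' : ((x - 1)%:E <= S2)%E.
    apply: ereal_sup_ubound; exists (x - 1); last by [].
    split; [lra | exact: hL1 hx1 hx].
  have := leeD2r 1%E hx'; rewrite -EFinD subrK; exact.
have : (S2 <= S1 - 1%:E)%E.
  apply: ge_ereal_sup => _ [y [y0 hy] <-].
  rewrite leeBrDr // -EFinD.
  apply: ereal_sup_ubound; exists (y + 1); last by [].
  split; [lra | exact: hL2 y0 hy].
move=> /(leeD2r 1%E); rewrite subeK //.
Qed.
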